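(* Let $U$ be a unicyclic graph of order $n\ge 3$ and let $X\in\mathbb R^{V(U)}$ be a vector all of whose entries are non-negative, or all of whose entries are non-positive. Label the vertices $v_1,\dots,v_n$ of $U$ so that $|X_{v_1}|\ge |X_{v_2}|\ge\cdots\ge |X_{v_n}|$, and write $X_i=X_{v_i}$. Then $$\sum_{uv\in E(U)}X_uX_v\ \le\ \sum_{i=2}^n X_1X_i+X_2X_3,$$ where the right-hand side equals $\sum_{uv\in E(S)}X_uX_v$ for the copy $S$ of $S_n^3$ on the same vertex set in which $v_1$ is adjacent to all other vertices and $v_2v_3$ is the additional edge. If moreover all entries of $X$ are positive (or all are negative) and $|X_1|>|X_2|$, then equality holds only if $U$ is isomorphic to $S_n^3$, with $v_1$ being its vertex of degree $n-1$.
   Context: A unicyclic graph is a connected graph containing exactly one cycle. $S_n^3$ denotes the graph of order $n$ obtained from the star $K_{1,n-1}$ by adding one edge between two of its pendant (degree-one) vertices. *)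

(* Defs.v *)
From HB Require Import structures.
From mathcomp Require Import all_boot all_order all_algebra.
Set Implicit Arguments. Unset Strict Implicit. Unset Printing Implicit Defensive.
Import Order.TTheory GRing.Theory Num.Theory.

Definition simple_graph (T : finType) (e : rel T) : Prop :=
  symmetric e /\ irreflexive e.

Definition edges (T : finType) (e : rel T) : {set {set T}} :=
  [set [set p.1; p.2] | p : T * T & e p.1 p.2].

Definition is_graph_cycle (T : finType) (e : rel T) (c : seq T) : bool :=
  [&& uniq c, 2 < size c & path.cycle e c].

(* The edge set of the cycle c (cycles are identified by their edge set,
   so rotations/reversals of c give the same cycle). *)
Definition cycle_edges (T : finType) (c : seq T) : {set {set T}} :=
  [set [set p.1; p.2] | p in zip c (rot 1 c)].

Definition connected_graph (T : finType) (e : rel T) : Prop :=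
  forall x y : T, connect e x y.

Definition unicyclic (T : finType) (e : rel T) : Prop :=
  connected_graph e /\
  exists C : {set {set T}},
    (exists c, is_graph_cycle e c /\ cycle_edges c = C) /\
    (forall c, is_graph_cycle e c -> cycle_edges c = C).

Definition edge_sum (T : finType) (R : comNzRingType) (e : rel T) (X : T -> R) : R :=
  (\sum_(E in edges e) \prod_(x in E) X x)%R.

Definition Sn3 (n : nat) : rel 'I_n :=
  fun i j => (i != j) &&
    [|| (nat_of_ord i == 0), (nat_of_ord j == 0) |
        ((nat_of_ord i == 1) && (nat_of_ord j == 2)) ||
        ((nat_of_ord i == 2) && (nat_of_ord j == 1))].

Definition iso_Sn3_centered (T : finType) (e : rel T) (v : T) : Prop :=
  exists f : T -> 'I_#|T|,
    bijective f /\ (forall x y, e x y = Sn3 (f x) (f y)) /\ nat_of_ord (f v) = 0.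

(* Main.v *)
Require Import Defs.
From HB Require Import structures.
From mathcomp Require Import all_boot all_order all_algebra all_fingroup.
From mathcomp Require Import ring lra zify.
Import Order.TTheory GRing.Theory Num.Theory.
Set Implicit Arguments. Unset Strict Implicit. Unset Printing Implicit Defensive.

Lemma path_zip (T : eqType) (e : rel T) x s :
  path e x s -> forall p, p \in zip (belast x s) s -> e p.1 p.2.
Proof.
elim: s x => [|y s IH] x //= /andP[hxy hp] p.
rewrite inE => /orP[/eqP -> // | hp'].
exact: IH hp'.
Qed.

Lemma cycle_zip (T : eqType) (e : rel T) c :
  path.cycle e c -> forall p, p \in zip c (rot 1 c) -> e p.1 p.2.
Proof.
case: c => [|z s] //= hc p; rewrite rot1_cons -{1}(belast_rcons z s z).
exact: path_zip hc p.
Qed.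

Lemma set2_eq (T : finType) (a b x y : T) : a != b -> [set a; b] = [set x; y] ->
  ((a == x) && (b == y)) || ((a == y) && (b == x)).
Proof.
move=> hab E.
have ha : a \in [set x; y] by rewrite -E set21.
have hb : b \in [set x; y] by rewrite -E set22.
rewrite !in_set2 in ha hb.
case/orP: ha => /eqP ha; case/orP: hb => /eqP hb; subst; rewrite ?eqxx //=.
- by rewrite eqxx in hab.
- by rewrite orbT.
- by rewrite eqxx in hab.
Qed.

Definition acyclic (T : finType) (H : rel T) := forall c, ~~ is_graph_cycle H c.

Lemma last_take_index (T : eqType) (y v : T) p : v \in p ->
  last y (take (index v p).+1 p) = v.
Proof.
move=> hv.
have hi : (index v p < size p)%N by rewrite index_mem.
rewrite (last_nth v) size_takel // /= nth_take //.
exact: nth_index.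
Qed.

Lemma nbr_head (T : finType) (H : rel T) : symmetric H -> acyclic H ->
  forall z y p v, uniq (z :: y :: p) -> path H z (y :: p) -> v \in p -> H z v -> False.
Proof.
move=> hsym hac z y p v hu hp hv hzv.
set i := index v p.
have hi : (i < size p)%N by rewrite index_mem.
have := hac (z :: y :: take i.+1 p); apply/negP/negPn.
apply/and3P; split.
- have -> : z :: y :: take i.+1 p = take i.+3 (z :: y :: p) by [].
  exact: take_uniq.
- by rewrite /= size_takel.
- rewrite /path.cycle -cats1 cat_path; apply/andP; split.
  + move: hp; rewrite -{1}(cat_take_drop i.+1 p) -cat_cons cat_path.
    by case/andP.
  + by rewrite /= last_take_index // hsym hzv.
Qed.

Lemma extend_path (T : finType) (H : rel T) (S : {set T}) : symmetric H ->
  forall k z p, (#|S| - size (z :: p) <= k)%N -> uniq (z :: p) ->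
  {subset z :: p <= S} -> path H z p ->
  exists z' p', [/\ uniq (z' :: p'), {subset z' :: p' <= S}, path H z' p',
    last z' p' = last z p & (size p <= size p')%N /\
    forall v, v \in S -> H z' v -> v \in z' :: p'].
Proof.
move=> hsym; elim=> [|k IH] z p hk hu hs hp.
- exists z, p; split=> //; split=> // v hvS hzv; apply/negPn/negP => hvn.
  have : (size (v :: z :: p) <= size (enum S))%N.
    apply: uniq_leq_size; first by apply/andP.
    by move=> w; rewrite inE mem_enum => /orP[/eqP -> // | /hs].
  rewrite -cardE => h; move: hk; rewrite leqn0 subn_eq0 => hk; have := leq_trans h hk; by rewrite ltnn.
- case: (boolP [exists v, [&& v \in S, H z v & v \notin z :: p]]).
  + case/existsP=> v /and3P[hvS hzv hvn].
    have hk' : (#|S| - size (v :: z :: p) <= k)%N by move: hk => /=; lia.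
    have [z' [p' [h1 h2 h3 h4 [h5 h6]]]] := IH v (z :: p) hk'
      ltac:(by apply/andP)
      ltac:(by move=> w; rewrite inE => /orP[/eqP -> // | /hs])
      ltac:(by rewrite /= hsym hzv hp).
    exists z', p'; split=> //; split=> //; move: h5 => /=; lia.
  + move=> hne; exists z, p; split=> //; split=> // v hvS hzv; apply/negPn/negP => hvn.
    by move/negP: hne; apply; apply/existsP; exists v; rewrite hvS hzv hvn.
Qed.

Lemma leaf_exists (T : finType) (H : rel T) (S : {set T}) (r w : T) :
  symmetric H -> irreflexive H -> acyclic H -> w \in S -> w != r ->
  exists2 l, (l \in S) && (l != r) &
    forall v v', v \in S -> v' \in S -> H l v -> H l v' -> v = v'.
Proof.
move=> hsym hirr hac hwS hwr.
have [[z' p'] [hu hs hp hlast hmax] hzr] : exists2 zp : T * seq T,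
    [/\ uniq (zp.1 :: zp.2), {subset zp.1 :: zp.2 <= S}, path H zp.1 zp.2,
     True & forall v, v \in S -> H zp.1 v -> v \in zp.1 :: zp.2] & zp.1 != r.
  case: (boolP [exists u, [&& r \in S, u \in S & H u r]]).
  + case/existsP=> u /and3P[hrS huS hur].
    have hur' : u != r by apply/eqP => E; rewrite E hirr in hur.
    have [z' [p' [h1 h2 h3 h4 [h5 h6]]]] := extend_path hsym (k := #|S|) (z := u) (p := [:: r])
      (leq_subr _ _)
      ltac:(by rewrite /= inE hur')
      ltac:(by move=> x; rewrite !inE => /orP[/eqP -> | /eqP ->])
      ltac:(by rewrite /= hur).
    exists (z', p') => //=.
    case: p' h1 h4 h5 {h2 h3 h6} => [|y p''] //= h1 h4 _.
    apply/eqP => E; move: h1; rewrite E -h4 => /andP[/negP hn _]; apply: hn.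
    exact: mem_last.
  + move=> hne.
    have [z' [p' [h1 h2 h3 h4 [h5 h6]]]] := extend_path hsym (k := #|S|) (z := w) (p := [::])
      (leq_subr _ _)
      ltac:(by [])
      ltac:(by move=> x; rewrite !inE => /eqP ->)
      ltac:(by []).
    exists (z', p') => //=.
    apply/eqP => E; subst z'.
    case: p' h1 h2 h3 h4 {h5 h6} => [|y p''] /= h1 h2 h3 h4; first by rewrite h4 eqxx in hwr.
    move/negP: hne; apply; apply/existsP; exists y.
    rewrite (h2 r) ?inE ?eqxx // (h2 y) ?inE ?eqxx ?orbT //= hsym.
    by case/andP: h3.
exists z'; first by rewrite hzr (hs z') // inE eqxx.
have key : forall v, v \in S -> H z' v -> v = head z' p'.
  move=> v hvS hzv.
  have := hmax v hvS hzv; rewrite inE => /orP[/eqP E | hv].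
    by rewrite E hirr in hzv.
  case: p' hu hp hv {hs hlast hmax hzr} => [|y p''] //= hu hp.
  rewrite inE => /orP[/eqP // | hv].
  by case: (nbr_head hsym hac hu hp hv hzv).
by move=> v v' hv hv' h1 h2; rewrite (key v) // (key v').
Qed.

Local Open Scope ring_scope.

Definition Dsum (R : realFieldType) (T : finType) (H : rel T) (a : T -> R)
  (S : {set T}) : R :=
  \sum_(u in S) \sum_(v in S) (if H u v then a u * a v else 0).

Definition Bsum (R : realFieldType) (T : finType) (a : T -> R) (r : T)
  (S : {set T}) : R := \sum_(w in S | w != r) a w.

Lemma Dsum_split (R : realFieldType) (T : finType) (H : rel T) (a : T -> R)
  (S : {set T}) l : symmetric H -> irreflexive H -> l \in S ->
  Dsum H a S = Dsum H a (S :\ l) +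
     2 * \sum_(v in S) (if H l v then a l * a v else 0).
Proof.
move=> hsym hirr hl.
set F := fun u v => if H u v then a u * a v else 0.
have Fs : forall u v, F u v = F v u by move=> u v; rewrite /F hsym mulrC.
have Fl : F l l = 0 by rewrite /F hirr.
rewrite /Dsum -/F (bigD1 l) //=.
have E1 : \sum_(i in S | i != l) \sum_(v in S) F i v =
    \sum_(i in S | i != l) F i l + \sum_(i in S | i != l) \sum_(v in S | v != l) F i v.
  rewrite -big_split /=; apply: eq_bigr => i _; by rewrite (bigD1 l).
have E2 : \sum_(i in S | i != l) F i l = \sum_(v in S) F l v.
  rewrite [RHS](bigD1 l) //= Fl add0r; apply: eq_bigr => i _; exact: Fs.
have E3 : \sum_(i in S :\ l) \sum_(v in S :\ l) F i v =
    \sum_(i in S | i != l) \sum_(v in S | v != l) F i v.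
  apply: eq_big => [i|i _]; first by rewrite in_setD1 andbC.
  by apply: eq_bigl => v; rewrite in_setD1 andbC.
rewrite E1 E2 E3; lra.
Qed.

Lemma Bsum_split (R : realFieldType) (T : finType) (a : T -> R) r
  (S : {set T}) l : l \in S -> l != r ->
  Bsum a r S = a l + Bsum a r (S :\ l).
Proof.
move=> hl hlr; rewrite /Bsum (bigD1 l) /=; last by rewrite hl.
congr (_ + _); apply: eq_bigl => w; rewrite in_setD1.
by case: (w == l); case: (w \in S); case: (w == r).
Qed.

Lemma forest_bound (R : realFieldType) (T : finType) (H : rel T) (a : T -> R) (r : T) :
  symmetric H -> irreflexive H -> acyclic H ->
  (forall w, 0 <= a w) -> (forall w, a w <= a r) ->
  forall S : {set T},
  Dsum H a S <= 2 * a r * Bsum a r S /\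
  ((forall w, 0 < a w) -> (forall w, w != r -> a w < a r) ->
   Dsum H a S = 2 * a r * Bsum a r S ->
   (forall w, w \in S -> w != r -> H w r) /\
   (forall u v, u \in S -> v \in S -> H u v -> (u == r) || (v == r))).
Proof.
move=> hsym hirr hac ha0 har S.
have [n hn] : exists n, (#|S| <= n)%N by exists #|S|.
elim: n S hn => [|n IH] S hn.
all: case: (boolP [exists w, (w \in S) && (w != r)]); last first.
1,3: move=> hne; have hSr : forall w, w \in S -> w = r.
1,3: by move=> w hw; apply/eqP/negPn/negP => hwr; move/negP: hne; apply;
       apply/existsP; exists w; rewrite hw hwr.
1,2: have D0 : Dsum H a S = 0.
1,3: by apply: big1 => u hu; apply: big1 => v hv; rewrite (hSr u) // (hSr v) // hirr.
1,2: have B0 : Bsum a r S = 0.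
1,3: by apply: big1 => w /andP[hw hwr]; rewrite (hSr w hw) eqxx in hwr.
1,2: rewrite D0 B0 mulr0; split=> // _ _ _; split.
1,3: by move=> w hw hwr; rewrite (hSr w hw) eqxx in hwr.
1,2: by move=> u v hu _ _; rewrite (hSr u hu) eqxx.
- case/existsP=> w /andP[hw _]; have : (0 < #|S|)%N by apply/card_gt0P; exists w.
  by rewrite leqn0 in hn; rewrite (eqP hn).
case/existsP=> w /andP[hwS hwr].
have [l /andP[hlS hlr] hleaf] := leaf_exists hsym hirr hac hwS hwr.
have hS' : (#|S :\ l| <= n)%N.
  by move: hn; rewrite (cardsD1 l S) hlS.
have [IH1 IH2] := IH (S :\ l) hS'.
rewrite (@Dsum_split _ _ H a S l hsym hirr hlS) (@Bsum_split _ _ a r S l hlS hlr).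
set row := \sum_(v in S) _.
have hrow : (exists2 u, u \in S & H l u /\ row = a l * a u) \/ row = 0.
  case: (boolP [exists u, (u \in S) && H l u]).
  + case/existsP=> u /andP[huS hlu]; left; exists u => //; split=> //.
    rewrite /row (bigD1 u) //= hlu big1 ?addr0 // => v /andP[hv hvu].
    case: ifP => // hlv; by rewrite (hleaf v u) ?eqxx in hvu.
  + move=> hne; right; apply: big1 => v hv; case: ifP => // hlv.
    by move/negP: hne; case; apply/existsP; exists v; rewrite hv hlv.
have hrowle : row <= a l * a r.
  case: hrow => [[u _ [_ ->]] | ->]; first by rewrite ler_wpM2l.
  by rewrite mulr_ge0.
split; first by nra.
move=> hpos hlt heq.
have heq1 : Dsum H a (S :\ l) = 2 * a r * Bsum a r (S :\ l) by nra.
have heq2 : row = a l * a r by nra.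
have [IHa IHb] := IH2 hpos hlt heq1.
have [u huS [hlu hrowu]] : exists2 u, u \in S & H l u /\ row = a l * a u.
  case: hrow => // h0; have := hpos l; have := hpos r; nra.
have hur : u = r.
  apply/eqP/negPn/negP => hne; have := hlt u hne.
  have : a u = a r.
    apply: (mulfI (x := a l)); first by rewrite gt_eqF // hpos.
    by rewrite -hrowu heq2.
  move=> ->; by rewrite ltxx.
subst u.
split.
- move=> v hv hvr; case: (eqVneq v l) => [-> // | hvl].
  by apply: IHa => //; rewrite in_setD1 hvl.
- move=> u v hu hv huv.
  case: (eqVneq u l) => [E | hul].
    subst u; by rewrite (hleaf v r) ?eqxx ?orbT.
  case: (eqVneq v l) => [E | hvl].
    subst v; rewrite hsym in huv; by rewrite (hleaf u r) ?eqxx.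
  by apply: IHb => //; rewrite in_setD1 ?hul ?hvl.
Qed.

Definition isf (T : eqType) (x y u v : T) : bool :=
  ((u == x) && (v == y)) || ((u == y) && (v == x)).

Lemma unicyclic_split (T : finType) (e : rel T) (v1 : T) :
  simple_graph e -> unicyclic e ->
  exists x y, [/\ x != y, x != v1, y != v1, e x y &
     acyclic (fun u v => e u v && ~~ isf x y u v)].
Proof.
move=> [hsym hirr] [_ [C [[c [hc hcC]] huni]]].
have [c0 [hc0 hv1]] : exists c0, is_graph_cycle e c0 /\
    (v1 \notin behead c0).
  case: (boolP (v1 \in c)) => hv.
  - case: (rot_to hv) => i s hrot.
    exists (v1 :: s); split; last first.
      have := hc; rewrite /is_graph_cycle -(rot_uniq i) hrot => /and3P[/= /andP[] //].
    by rewrite -hrot /is_graph_cycle rot_uniq size_rot rot_cycle.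
  - exists c; split => //; apply/negP => h; apply/negP: hv.
    by case: c {hc hcC huni} h => //= x s h; rewrite inE h orbT.
have hC := huni _ hc0.
case: c0 hc0 hv1 hC => [|a [|x [|y s]]] hc0 //; try by case/and3P: hc0.
rewrite /= !inE negb_or => /andP[hxv /norP[hyv _]] hC.
have hxy : x != y.
  by case/and3P: hc0 => /= /andP[_ /andP[]]; rewrite inE negb_or => /andP[].
have exy : e x y by case/and3P: hc0 => _ _ /= /and3P[].
exists x, y; split; rewrite ?(eq_sym x v1) ?(eq_sym y v1) //.
move=> c'; apply/negP => hc'.
have hc'e : is_graph_cycle e c'.
  case/and3P: hc' => h1 h2 h3; apply/and3P; split => //.
  by apply: sub_cycle h3 => u v /andP[].
have hf : [set x; y] \in cycle_edges c'.
  rewrite (huni _ hc'e) -hC; apply/imsetP; exists (x, y) => //.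
  by rewrite rot1_cons /= !inE eqxx orbT.
case/imsetP: hf => p hp Ep.
have := cycle_zip (e := fun u v => e u v && ~~ isf x y u v) (c := c').
case/and3P: hc' => _ _ hcyc; move/(_ hcyc p hp) => /andP[hep hnf].
have hp12 : p.1 != p.2 by apply/eqP => E; rewrite E hirr in hep.
by move/negP: hnf; apply; rewrite /isf; apply: set2_eq hp12 _; rewrite Ep.
Qed.

Lemma prod_set2 (R : realFieldType) (T : finType) (X : T -> R) (u v : T) :
  u != v -> \prod_(x in [set u; v]) X x = X u * X v.
Proof.
move=> huv; rewrite big_setU1 /= ?big_set1 //.
by rewrite in_set1.
Qed.

Lemma edge_sum_pairs (R : realFieldType) (T : finType) (e : rel T) (X : T -> R) :
  simple_graph e ->
  edge_sum e X *+ 2 = \sum_u \sum_v (if e u v then X u * X v else 0).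
Proof.
move=> [hsym hirr].
rewrite pair_bigA /= -big_mkcond /=.
set A := [set p : T * T | e p.1 p.2].
have -> : \sum_(p | e p.1 p.2) X p.1 * X p.2 = \sum_(p in A) X p.1 * X p.2.
  by apply: eq_bigl => p; rewrite inE.
rewrite (partition_big_imset (fun p : T * T => [set p.1; p.2])) /=.
rewrite /edge_sum -sumrMnl; apply: eq_bigr => E /imsetP[[u v] /=].
rewrite inE /= => huv ->.
have hne : u != v by apply/eqP => E0; rewrite E0 hirr in huv.
rewrite prod_set2 // (bigD1 (u, v)) /=; last by rewrite inE huv eqxx.
rewrite (bigD1 (v, u)) /=; last first.
  rewrite inE hsym huv /=; apply/andP; split.
    by apply/eqP/setP => z; rewrite !inE orbC.
  by apply/eqP => [[E1 E2]]; rewrite E1 eqxx in hne.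
rewrite big1 ?addr0 ?mulr2n 1?mulrC // => [[u' v']] /= /andP[/andP[/andP[]]].
rewrite inE /= => he hE hn1 hn2.
have hne' : u' != v' by apply/eqP => E0; rewrite E0 hirr in he.
case/orP: (set2_eq hne' (eqP hE)) => /andP[/eqP E1 /eqP E2]; subst.
- by rewrite eqxx in hn1.
- by rewrite eqxx in hn2.
Qed.

Lemma iso_build (T : finType) (e : rel T) (v1 x y : T) :
  (3 <= #|T|)%N -> x != y -> x != v1 -> y != v1 ->
  (forall u v, e u v = (u != v) && [|| u == v1, v == v1 | isf x y u v]) ->
  iso_Sn3_centered e v1.
Proof.
move=> hn hxy hx hy he.
have h0 : (0 < #|T|)%N by lia.
have h1 : (1 < #|T|)%N by lia.
pose o0 : 'I_#|T| := Ordinal h0.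
pose o1 : 'I_#|T| := Ordinal h1.
pose o2 : 'I_#|T| := Ordinal hn.
pose h := @enum_rank T.
have hinj : injective h by exact: enum_rank_inj.
pose s1 := tperm (h v1) o0.
pose s2 := tperm (s1 (h x)) o1.
pose s3 := tperm (s2 (s1 (h y))) o2.
pose g := fun t => s3 (s2 (s1 (h t))).
have ginj : injective g.
  by move=> a b /perm_inj /perm_inj /perm_inj /hinj.
have g1 : s1 (h v1) = o0 by rewrite tpermL.
have hne : forall a b, a != b -> s1 (h a) != s1 (h b).
  by move=> a b hab; rewrite (inj_eq perm_inj) (inj_eq hinj).
have hne2 : forall a b, a != b -> s2 (s1 (h a)) != s2 (s1 (h b)).
  by move=> a b hab; rewrite (inj_eq perm_inj) hne.
have s2o0 : s2 o0 = o0.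
  by rewrite /s2 tpermD // -g1; apply: hne.
have gv1 : g v1 = o0.
  rewrite /g g1 s2o0 /s3 tpermD //.
  have E1 : s2 (s1 (h v1)) = o0 by rewrite g1 s2o0.
  by rewrite -[in X in _ != X]E1; apply: hne2.
have gx : g x = o1.
  rewrite /g /s2 tpermL /s3 tpermD //.
  have <- : s2 (s1 (h x)) = o1 by rewrite /s2 tpermL.
  by apply: hne2; rewrite eq_sym.
have gy : g y = o2 by rewrite /g /s3 tpermL.
have gbij : bijective g by apply: (@inj_card_bij _ _ g ginj); rewrite card_ord.
exists g; split => //; split; last by rewrite gv1.
move=> u v.
have E : forall t z c, g z = c -> (nat_of_ord (g t) == nat_of_ord c) = (t == z).
  move=> t z c <-; apply/eqP/eqP => [/ord_inj/ginj // | -> //].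
rewrite he /Sn3 (inj_eq ginj).
rewrite -[0%N]/(nat_of_ord o0) -[1%N]/(nat_of_ord o1) -[2%N]/(nat_of_ord o2).
by rewrite !(E _ _ _ gv1) !(E _ _ _ gx) !(E _ _ _ gy).
Qed.

Lemma delta2 (R : realFieldType) (T : finType) (F : T -> T -> R) (x y : T) :
  \sum_u \sum_v (if (u == x) && (v == y) then F u v else 0) = F x y.
Proof.
rewrite (bigD1 x) //= [X in _ + X]big1 ?addr0; last first.
  by move=> u hu; apply: big1 => v _; rewrite (negbTE hu).
rewrite (bigD1 y) //= !eqxx /= [X in _ + X]big1 ?addr0 // => v hv.
by rewrite (negbTE hv).
Qed.

Lemma isf_sum (R : realFieldType) (T : finType) (F : T -> T -> R) (x y : T) :
  x != y -> \sum_u \sum_v (if isf x y u v then F u v else 0) = F x y + F y x.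
Proof.
move=> hxy; rewrite -(delta2 F x y) -(delta2 F y x) -big_split /=.
apply: eq_bigr => u _; rewrite -big_split /=; apply: eq_bigr => v _.
rewrite /isf; case: (eqVneq u x) => [->|hux] /=.
  case: (eqVneq v y) => [->|hvy] /=; last by rewrite add0r.
  by rewrite (negbTE hxy) addr0.
by rewrite add0r.
Qed.

Lemma sum_tail (R : realFieldType) (T : finType) (F : T -> R) v1 l :
  perm_eq (v1 :: l) (enum T) ->
  \sum_(u <- l) F u = \sum_(u | u != v1) F u.
Proof.
move=> hp.
have : \sum_(u <- v1 :: l) F u = \sum_u F u by rewrite (perm_big _ hp) /= big_enum.
by rewrite big_cons (bigD1 v1) //= => /addrI.
Qed.

Unset Implicit Arguments.

Theorem lemma3p2 (R : realFieldType) (T : finType) (e : rel T)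
    (X : T -> R) (v1 v2 v3 : T) (rest : seq T) :
  simple_graph e -> unicyclic e -> (3 <= #|T|)%N ->
  ((forall v, 0 <= X v) \/ (forall v, X v <= 0)) ->
  perm_eq [:: v1, v2, v3 & rest] (enum T) ->
  sorted (fun u w => `|X w| <= `|X u|) [:: v1, v2, v3 & rest] ->
  edge_sum e X <= \sum_(u <- [:: v2, v3 & rest]) X v1 * X u + X v2 * X v3
  /\
  (((forall v, 0 < X v) \/ (forall v, X v < 0)) ->
   `|X v2| < `|X v1| ->
   edge_sum e X = \sum_(u <- [:: v2, v3 & rest]) X v1 * X u + X v2 * X v3 ->
   iso_Sn3_centered e v1).
Proof.
move=> hsg huc hn hsign hperm hsort.
pose a := fun v => `|X v|.
have hprod : forall u v, X u * X v = a u * a v.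
  move=> u v; rewrite /a; case: hsign => h.
  - by rewrite !ger0_norm.
  - by rewrite !ler0_norm // mulrNN.
have ha0 : forall w, 0 <= a w by move=> w; rewrite /a normr_ge0.
have hall : forall w, w \in [:: v1, v2, v3 & rest].
  by move=> w; rewrite (perm_mem hperm) mem_enum.
have huniq : uniq [:: v1, v2, v3 & rest] by rewrite (perm_uniq hperm) enum_uniq.
have htr : transitive (fun u w => a w <= a u).
  by move=> y' x' z' h1 h2; exact: le_trans h2 h1.
have hpath : path (fun u w => a w <= a u) v1 [:: v2, v3 & rest] by [].
have hl1 := order_path_min htr hpath.
have hpath2 : path (fun u w => a w <= a u) v2 [:: v3 & rest] by case/andP: hpath.
have hl2 := order_path_min htr hpath2.
have hpath3 : path (fun u w => a w <= a u) v3 rest by case/andP: hpath2.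
have h23 : a v3 <= a v2 by case/andP: hpath2.
have hl3 := order_path_min htr hpath3.
have hA1 : forall w, a w <= a v1.
  move=> w; have := hall w; rewrite inE => /orP[/eqP -> // | hw].
  exact: (allP hl1).
have hA2 : forall w, w != v1 -> a w <= a v2.
  move=> w hw; have := hall w; rewrite inE (negbTE hw) /= inE => /orP[/eqP -> // | hw'].
  exact: (allP hl2).
have hA3 : forall w, w != v1 -> w != v2 -> a w <= a v3.
  move=> w hw hw'; have := hall w.
  rewrite inE (negbTE hw) /= inE (negbTE hw') /= inE => /orP[/eqP -> // | hw''].
  exact: (allP hl3).
have [hsym hirr] := hsg.
have [x [y [hxy hxv hyv exy hac]]] := unicyclic_split v1 hsg huc.
pose H := fun u v => e u v && ~~ isf x y u v.
have isfS : forall u v, isf x y v u = isf x y u v.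
  by move=> u v; rewrite /isf orbC [(v == y) && _]andbC [(v == x) && _]andbC.
have isfE : forall u v, isf x y u v -> e u v.
  by move=> u v /orP[/andP[/eqP -> /eqP ->] | /andP[/eqP -> /eqP ->]] //; rewrite hsym.
have hsymH : symmetric H by move=> u v; rewrite /H hsym isfS.
have hirrH : irreflexive H by move=> u; rewrite /H hirr.
have [fb1 fb2] := forest_bound hsymH hirrH hac ha0 hA1 setT.
have hsum : edge_sum e X *+ 2 = Dsum H a setT + a x * a y *+ 2.
  rewrite edge_sum_pairs // mulr2n.
  have -> : a x * a y + a x * a y = a x * a y + a y * a x by rewrite (mulrC (a y)).
  rewrite -(isf_sum (fun u v => a u * a v) hxy) /Dsum.
  have -> : \sum_(u in [set: T]) \sum_(v in [set: T]) (if H u v then a u * a v else 0)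
      = \sum_u \sum_v (if H u v then a u * a v else 0).
    apply: eq_big => [u|u _]; first by rewrite in_setT.
    by apply: eq_bigl => v; rewrite in_setT.
  rewrite -big_split /=; apply: eq_bigr => u _.
  rewrite -big_split /=; apply: eq_bigr => v _.
  rewrite hprod /H; case: (boolP (isf x y u v)) => hf /=.
    by rewrite (isfE _ _ hf) andbF add0r.
  by rewrite andbT addr0.
have hB : \sum_(u <- [:: v2, v3 & rest]) X v1 * X u = a v1 * Bsum a v1 setT.
  rewrite (sum_tail _ hperm) /Bsum mulr_sumr; apply: eq_big => [w|w _].
    by rewrite in_setT.
  exact: hprod.
have hxy23 : a x * a y <= a v2 * a v3.
  have h32 := h23.
  case: (eqVneq x v2) => [E | hx2].
    subst x; apply: ler_wpM2l => //; apply: hA3 => //; by rewrite eq_sym.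
  case: (eqVneq y v2) => [E | hy2].
    subst y; rewrite mulrC; apply: ler_wpM2l => //; exact: hA3.
  have := hA3 x hxv hx2; have := hA3 y hyv hy2; have := ha0 x; have := ha0 y.
  nra.
rewrite (_ : \sum_(u <- _) _ = a v1 * Bsum a v1 setT); last exact: hB.
rewrite hprod.
split.
  move: hsum; rewrite !mulr2n => hsum; nra.
move=> hstrict hlt heq.
have hpos : forall w, 0 < a w.
  move=> w; rewrite /a normr_gt0; case: hstrict => h.
    by rewrite gt_eqF.
  by rewrite lt_eqF.
have hlt' : forall w, w != v1 -> a w < a v1.
  by move=> w hw; apply: le_lt_trans (hA2 w hw) hlt.
have hD : Dsum H a setT = 2 * a v1 * Bsum a v1 setT.
  move: hsum; rewrite heq ?hprod !mulr2n => hsum; nra.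
have [hadj hcon] := fb2 hpos hlt' hD.
apply: (iso_build hn hxy hxv hyv) => u v.
apply/idP/idP.
- move=> huv; have hne : u != v by apply/eqP => E; rewrite E hirr in huv.
  rewrite hne /=; case: (boolP (isf x y u v)) => hf; first by rewrite !orbT.
  rewrite orbF; apply: hcon; rewrite ?in_setT //.
  by rewrite /H huv hf.
- case/andP=> huv /or3P[/eqP E | /eqP E | hf].
  + subst u; rewrite hsym.
    have := hadj v (in_setT v); rewrite eq_sym => /(_ huv) /andP[] //.
  + subst v.
    by have := hadj u (in_setT u) huv => /andP[].
  + exact: isfE.
Qed.
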